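(* Let $(\mathbf x,\mathbf y,\mathbf z,s,u,t,\boldsymbol\delta,\boldsymbol\beta,\gamma)$ be any primal–dual feasible pair for (P-SOCP)/(D-SOCP) and let $C\subseteq[n]$ be nonempty. If $\|\mathbf q_{ij}\|\le\lambda$ for all $i,j\in C$ with $i<j$, then the minimizer $\mathbf x^*$ of (P) satisfies $\mathbf x_i^*=\mathbf x_j^*$ for all $i,j\in C$ (i.e. $C$ is a cluster or is contained in a cluster).
   Context: Data: integers $n\ge2$, $d\ge1$, points $\mathbf a_1,\dots,\mathbf a_n\in\mathbb R^d$, weights $r_1,\dots,r_n>0$, parameter $\lambda>0$; $\|\cdot\|$ Euclidean. Problem (P): minimize over $\mathbf x=(\mathbf x_1,\dots,\mathbf x_n)\in(\mathbb R^d)^n$ the strictly convex function $f'(\mathbf x)=\frac12\sum_ir_i\|\mathbf x_i-\mathbf a_i\|^2+\lambda\sum_{i<j}r_ir_j\|\mathbf x_i-\mathbf x_j\|$; its unique minimizer is $\mathbf x^*$; clusters are the equivalence classes of $i\sim j\iff\mathbf x_i^*=\mathbf x_j^*$. Antisymmetric index notation: given vectors $\mathbf v_{ij}$ for $i<j$, $\mathbf v_{\langle ij\rangle}=\mathbf v_{ij}$ ($i<j$), $-\mathbf v_{ji}$ ($i>j$), $\mathbf 0$ ($i=j$). (P-SOCP): variables $\mathbf x_i,\mathbf z_i\in\mathbb R^d$, $s_i,u_i\in\mathbb R$, $\mathbf y_{ij}\in\mathbb R^d$, $t_{ij}\in\mathbb R$ ($i<j$); minimize $\sum_i r_is_i+\lambda\sum_{i<j}r_ir_jt_{ij}$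 s.t. $\mathbf y_{ij}=\mathbf x_i-\mathbf x_j$, $\mathbf z_i=\mathbf x_i-\mathbf a_i$, $s_i=u_i+1$, $t_{ij}\ge\|\mathbf y_{ij}\|$, $s_i\ge\|(\mathbf z_i,u_i)\|$. (D-SOCP): variables $\boldsymbol\delta_{ij}$ ($i<j$), $\boldsymbol\beta_i\in\mathbb R^d$, $\gamma_i\in\mathbb R$; maximize $\sum_ir_i\mathbf a_i^T\boldsymbol\beta_i+\sum_ir_i\gamma_i$ s.t. $\sum_jr_j\boldsymbol\delta_{\langle ij\rangle}+\boldsymbol\beta_i=\mathbf 0$, $\|\boldsymbol\delta_{ij}\|\le\lambda$, $1-\gamma_i\ge\|(\boldsymbol\beta_i,\gamma_i)\|$. $\boldsymbol\sigma_2^i:=s_i\boldsymbol\beta_i+(1-\gamma_i)\mathbf z_i$, $\sigma_3^i:=s_i\gamma_i+(1-\gamma_i)u_i$, $\boldsymbol\omega_i:=\frac{\sigma_3^i}{s_i}\mathbf z_i+\frac1{s_i}\boldsymbol\sigma_2^i$, $r_C:=\sum_{i\in C}r_i$, and for $i<j$ in $C$: $\mathbf q_{ij}:=-\boldsymbol\delta_{ij}+\frac1{r_C}(\mathbf x_i-\mathbf x_j-\boldsymbol\omega_i+\boldsymbol\omega_j)-\frac1{r_C}\sum_{k\notin C}r_k(\boldsymbol\delta_{\langle ik\rangle}-\boldsymbol\delta_{\langle jk\rangle})$. *)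

(* Defs.v *)
From HB Require Import structures.
From mathcomp Require Import all_boot all_order all_algebra.
From mathcomp Require Import reals.
Set Implicit Arguments. Unset Strict Implicit. Unset Printing Implicit Defensive.
Import Order.TTheory GRing.Theory Num.Theory.
Local Open Scope ring_scope.

Section Defs.
Variable R : realType.

Definition vnorm (d : nat) (v : 'rV[R]_d) : R :=
  Num.sqrt (\sum_(k < d) v ord0 k ^+ 2).

(* Euclidean norm of the stacked vector (z, u) in R^(d+1) *)
Definition vnorm_ext (d : nat) (v : 'rV[R]_d) (c : R) : R :=
  Num.sqrt (\sum_(k < d) v ord0 k ^+ 2 + c ^+ 2).

Variables (n d : nat).

Definition fP (a : 'I_n -> 'rV[R]_d) (r : 'I_n -> R) (lam : R)
    (x : 'I_n -> 'rV[R]_d) : R :=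
  2^-1 * (\sum_(i < n) r i * vnorm (x i - a i) ^+ 2)
  + lam * (\sum_(i < n) \sum_(j < n | (i < j)%N) r i * r j * vnorm (x i - x j)).

Definition is_minimizer_P (a : 'I_n -> 'rV[R]_d) (r : 'I_n -> R) (lam : R)
    (xs : 'I_n -> 'rV[R]_d) : Prop :=
  forall x, fP a r lam xs <= fP a r lam x.

(* antisymmetric index notation v_<ij> from values v i j given for i < j *)
Definition anti (v : 'I_n -> 'I_n -> 'rV[R]_d) (i j : 'I_n) : 'rV[R]_d :=
  if (i < j)%N then v i j else if (j < i)%N then - v j i else 0.

Definition primal_feasible (a : 'I_n -> 'rV[R]_d)
    (x z : 'I_n -> 'rV[R]_d) (s u : 'I_n -> R)
    (y : 'I_n -> 'I_n -> 'rV[R]_d) (t : 'I_n -> 'I_n -> R) : Prop :=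
  (forall i j : 'I_n, (i < j)%N -> y i j = x i - x j) /\
  (forall i, z i = x i - a i) /\
  (forall i, s i = u i + 1) /\
  (forall i j : 'I_n, (i < j)%N -> vnorm (y i j) <= t i j) /\
  (forall i, vnorm_ext (z i) (u i) <= s i).

Definition dual_feasible (r : 'I_n -> R) (lam : R)
    (delta : 'I_n -> 'I_n -> 'rV[R]_d) (beta : 'I_n -> 'rV[R]_d)
    (gamma : 'I_n -> R) : Prop :=
  (forall i, \sum_(j < n) r j *: anti delta i j + beta i = 0) /\
  (forall i j : 'I_n, (i < j)%N -> vnorm (delta i j) <= lam) /\
  (forall i, vnorm_ext (beta i) (gamma i) <= 1 - gamma i).

Definition sigma2 (z beta : 'I_n -> 'rV[R]_d) (s gamma : 'I_n -> R) i :=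
  s i *: beta i + (1 - gamma i) *: z i.

Definition sigma3 (s u gamma : 'I_n -> R) i : R :=
  s i * gamma i + (1 - gamma i) * u i.

Definition omega (z beta : 'I_n -> 'rV[R]_d) (s u gamma : 'I_n -> R) i :=
  (sigma3 s u gamma i / s i) *: z i + (s i)^-1 *: sigma2 z beta s gamma i.

Definition rC (r : 'I_n -> R) (C : {set 'I_n}) : R := \sum_(i in C) r i.

Definition qvec (r : 'I_n -> R) (C : {set 'I_n})
    (x z : 'I_n -> 'rV[R]_d) (s u : 'I_n -> R)
    (delta : 'I_n -> 'I_n -> 'rV[R]_d) (beta : 'I_n -> 'rV[R]_d)
    (gamma : 'I_n -> R) (i j : 'I_n) : 'rV[R]_d :=
  - delta i j
  + (rC r C)^-1 *: (x i - x j - omega z beta s u gamma i + omega z beta s u gamma j)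
  - (rC r C)^-1 *: (\sum_(k < n | k \notin C) r k *: (anti delta i k - anti delta j k)).

End Defs.

(* Main.v *)
Require Import Defs.
From HB Require Import structures.
From mathcomp Require Import all_boot all_order all_algebra.
From mathcomp Require Import reals ring lra.
Import Order.TTheory GRing.Theory Num.Theory.
Local Open Scope ring_scope.
Set Implicit Arguments. Unset Strict Implicit.

Section Dot.
Variables (R : realType) (d : nat).
Implicit Types (u v w : 'rV[R]_d).

Definition dot u v : R := \sum_(k < d) u ord0 k * v ord0 k.

Lemma dotC u v : dot u v = dot v u.
Proof. by apply: eq_bigr => k _; rewrite mulrC. Qed.

Lemma dotDl u v w : dot (u + v) w = dot u w + dot v w.
Proof. by rewrite /dot -big_split; apply: eq_bigr => k _; rewrite !mxE mulrDl. Qed.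

Lemma dotNl u w : dot (- u) w = - dot u w.
Proof. by rewrite /dot -sumrN; apply: eq_bigr => k _; rewrite !mxE mulNr. Qed.

Lemma dotBl u v w : dot (u - v) w = dot u w - dot v w.
Proof. by rewrite dotDl dotNl. Qed.

Lemma dotZl (c : R) u w : dot (c *: u) w = c * dot u w.
Proof. by rewrite /dot mulr_sumr; apply: eq_bigr => k _; rewrite !mxE mulrA. Qed.

Lemma dot0l w : dot 0 w = 0.
Proof. by rewrite /dot big1 // => k _; rewrite mxE mul0r. Qed.

Lemma dot_suml (I : finType) (P : pred I) (F : I -> 'rV[R]_d) w :
  dot (\sum_(i | P i) F i) w = \sum_(i | P i) dot (F i) w.
Proof.
rewrite /dot exchange_big /=; apply: eq_bigr => k _.
by rewrite summxE mulr_suml.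
Qed.

Lemma dotDr u v w : dot w (u + v) = dot w u + dot w v.
Proof. by rewrite dotC dotDl !(dotC w). Qed.
Lemma dotBr u v w : dot w (u - v) = dot w u - dot w v.
Proof. by rewrite dotC dotBl !(dotC w). Qed.
Lemma dotNr u w : dot w (- u) = - dot w u.
Proof. by rewrite dotC dotNl dotC. Qed.
Lemma dotZr (c : R) u w : dot w (c *: u) = c * dot w u.
Proof. by rewrite dotC dotZl dotC. Qed.

Lemma dot_ge0 u : 0 <= dot u u.
Proof. by apply: sumr_ge0 => k _; rewrite -expr2 sqr_ge0. Qed.

Lemma dot_eq0 u : dot u u = 0 -> u = 0.
Proof.
move=> h; apply/rowP => k; rewrite mxE.
have /eqP := h; rewrite psumr_eq0; last by move=> i _; rewrite -expr2 sqr_ge0.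
move/allP/(_ k (mem_index_enum _)); rewrite -expr2 sqrf_eq0 => /eqP.
by rewrite (ord1 ord0).
Qed.

Lemma vnormE u : vnorm u = Num.sqrt (dot u u).
Proof. by rewrite /vnorm /dot; congr Num.sqrt; apply: eq_bigr => k _; rewrite expr2. Qed.

Lemma vnorm_sq u : vnorm u ^+ 2 = dot u u.
Proof. by rewrite vnormE sqr_sqrtr // dot_ge0. Qed.

Lemma vnorm_ge0 u : 0 <= vnorm u.
Proof. by rewrite vnormE sqrtr_ge0. Qed.

Lemma vnormN u : vnorm (- u) = vnorm u.
Proof. by rewrite !vnormE dotNl dotNr opprK. Qed.

Lemma vnormB u v : vnorm (u - v) = vnorm (v - u).
Proof. by rewrite -vnormN opprB. Qed.

Lemma vnorm0 : vnorm (0 : 'rV[R]_d) = 0.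
Proof. by rewrite vnormE dot0l sqrtr0. Qed.

Lemma CS_sq u v : dot u v ^+ 2 <= dot u u * dot v v.
Proof.
set A := dot u u; set B := dot v v; set P := dot u v.
have hA := dot_ge0 u.
have [A0|Apos] := eqVneq A 0.
  by rewrite /P (dot_eq0 A0) dot0l expr0n /= mulr_ge0 ?dot_ge0.
have h := dot_ge0 (A *: v - P *: u).
rewrite !(dotBl, dotBr, dotZl, dotZr) -/A -/B -/P (dotC v u) -/P in h.
have Ap : 0 < A by rewrite lt0r Apos hA.
have e : A * (A * B - P * P) - P * (A * P - P * A) = A * (A * B - P ^+ 2) by ring.
by rewrite e pmulr_rge0 // subr_ge0 in h.
Qed.

Lemma CS u v : dot u v <= vnorm u * vnorm v.
Proof.
have [hP|hP] := lerP (dot u v) 0.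
  by apply: le_trans hP _; rewrite mulr_ge0 ?vnorm_ge0.
rewrite !vnormE -sqrtrM ?dot_ge0 //.
rewrite -(ger0_norm (ltW hP)) -sqrtr_sqr ler_sqrt ?CS_sq //.
by rewrite mulr_ge0 ?dot_ge0.
Qed.
End Dot.
Lemma pair_sum (R : realType) n (F : 'I_n -> 'I_n -> R)
  (Fs : forall i j, F i j = F j i) (F0 : forall i, F i i = 0) :
  \sum_(i < n) \sum_(j < n | (i < j)%N) F i j = 2^-1 * \sum_(i < n) \sum_(j < n) F i j.
Proof.
have e : \sum_(i < n) \sum_(j < n) F i j =
  \sum_(i < n) \sum_(j < n) (if (i < j)%N then F i j else 0) +
  \sum_(i < n) \sum_(j < n) (if (j < i)%N then F i j else 0).
  rewrite -big_split; apply: eq_bigr => i _; rewrite -big_split; apply: eq_bigr => j _ /=.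
  case: ltngtP => h; rewrite ?addr0 ?add0r //.
  by rewrite (val_inj h) F0.
have e2 : \sum_(i < n) \sum_(j < n) (if (j < i)%N then F i j else 0) =
  \sum_(i < n) \sum_(j < n) (if (i < j)%N then F i j else 0).
  rewrite exchange_big; apply: eq_bigr => i _; apply: eq_bigr => j _.
  by rewrite Fs.
rewrite e e2.
have -> : \sum_(i < n) \sum_(j < n | (i < j)%N) F i j =
   \sum_(i < n) \sum_(j < n) (if (i < j)%N then F i j else 0).
  by apply: eq_bigr => i _; rewrite big_mkcond.
set S := \sum_(i < n) _. 
by rewrite -mulr2n -mulr_natr; field.
Qed.

Lemma cross_le (R : realType) n d (C : {set 'I_n}) (r : 'I_n -> R)
  (hr : forall i, 0 < r i) (v : 'I_n -> 'rV[R]_d) (y : 'rV[R]_d)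
  (rc := \sum_(i in C) r i) (hrc : 0 < rc) :
  rc * vnorm (rc^-1 *: (\sum_(i in C) r i *: v i) - y)
    <= \sum_(i in C) r i * vnorm (v i - y).
Proof.
set w := _ - y.
have ew : w = rc^-1 *: \sum_(i in C) r i *: (v i - y).
  have -> : \sum_(i in C) r i *: (v i - y) = \sum_(i in C) r i *: v i - rc *: y.
    by rewrite /rc scaler_suml -sumrB; apply: eq_bigr => i _; rewrite scalerBr.
  by rewrite scalerBr scalerA mulVf ?scale1r // gt_eqF.
have hS : 0 <= \sum_(i in C) r i * vnorm (v i - y).
  by apply: sumr_ge0 => i _; rewrite mulr_ge0 ?vnorm_ge0 // ltW.
have [w0|wpos] := eqVneq (vnorm w) 0.
  by rewrite w0 mulr0.
have wp : 0 < vnorm w by rewrite lt0r wpos vnorm_ge0.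
have h : vnorm w ^+ 2 <= rc^-1 * (\sum_(i in C) r i * vnorm (v i - y)) * vnorm w.
  rewrite vnorm_sq {1}ew dotZl dot_suml -mulrA ler_pM2l ?invr_gt0 //.
  rewrite mulr_suml; apply: ler_sum => i _.
  by rewrite dotZl -mulrA ler_pM2l ?CS.
rewrite expr2 ler_pM2r // in h.
have hi : 0 < rc^-1 by rewrite invr_gt0.
by rewrite -(ler_pM2l hi) mulrA mulVf ?mul1r ?gt_eqF.
Qed.

Lemma dot_sumr (R : realType) d (I : finType) (P : pred I) (F : I -> 'rV[R]_d) w :
  dot w (\sum_(i | P i) F i) = \sum_(i | P i) dot w (F i).
Proof. by rewrite dotC dot_suml; apply: eq_bigr => i _; rewrite dotC. Qed.

Lemma inner_le (R : realType) n d (C : {set 'I_n}) (r : 'I_n -> R)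
  (hr : forall i, 0 < r i) (x : 'I_n -> 'rV[R]_d) (c : 'rV[R]_d)
  (hc : \sum_(i in C) r i *: (x i - c) = 0)
  (a : 'I_n -> 'rV[R]_d) (Q : 'I_n -> 'I_n -> 'rV[R]_d) (V : 'rV[R]_d) (lam : R)
  (hQa : forall i, i \in C -> a i = V + \sum_(j in C) r j *: Q i j)
  (hQs : forall i j, Q j i = - Q i j)
  (hQb : forall i j, i \in C -> j \in C -> vnorm (Q i j) <= lam) :
  2 * \sum_(i in C) r i * dot (x i - c) (a i)
    <= lam * \sum_(i in C) \sum_(j in C) r i * r j * vnorm (x i - x j).
Proof.
set S := \sum_(i in C) \sum_(j in C) r i * r j * dot (x i - c) (Q i j).
have e1 : \sum_(i in C) r i * dot (x i - c) (a i) = S.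
  rewrite (eq_bigr (fun i => r i * dot (x i - c) V +
       \sum_(j in C) r i * r j * dot (x i - c) (Q i j))); last first.
    move=> i iC; rewrite hQa // dotDr dot_sumr mulrDr mulr_sumr; congr (_ + _); rewrite mulr_sumr.
    rewrite (eq_bigr (fun j => r i * r j * dot (x i - c) (Q i j))) // => j _.
    by rewrite dotZr mulrA.
  rewrite big_split /=.
  have -> : \sum_(i in C) r i * dot (x i - c) V = 0.
    by rewrite -[RHS](dot0l V) -hc dot_suml; apply: eq_big => // i _; rewrite dotZl.
  by rewrite add0r.
have e2 : S = - \sum_(i in C) \sum_(j in C) r i * r j * dot (x j - c) (Q i j).
  rewrite /S exchange_big /= -sumrN; apply: eq_bigr => i _.
  rewrite -sumrN; apply: eq_bigr => j _.
  by rewrite hQs dotNr mulrN (mulrC (r j)).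
have e3 : 2 * S = \sum_(i in C) \sum_(j in C) r i * r j * dot (x i - x j) (Q i j).
  have -> : 2 * S = S + S by ring.
  rewrite {2}e2 /S -sumrB.
  apply: eq_bigr => i _; rewrite -sumrB; apply: eq_bigr => j _.
  rewrite -mulrBr -dotBl; congr (_ * dot _ _).
  by rewrite opprB addrA subrK.
rewrite e1 e3 mulr_sumr; apply: ler_sum => i iC.
rewrite mulr_sumr; apply: ler_sum => j jC.
rewrite mulrCA ler_pM2l ?mulr_gt0 //.
apply: (le_trans (CS _ _)); rewrite mulrC ler_wpM2r ?vnorm_ge0 //.
exact: hQb.
Qed.

Lemma cross_ge0 (R : realType) n d (C : {set 'I_n}) (r : 'I_n -> R)
  (hr : forall i, 0 < r i) (x : 'I_n -> 'rV[R]_d) (y : 'rV[R]_d)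
  (hrc : 0 < \sum_(i in C) r i) :
  0 <= \sum_(i in C) r i * (vnorm (x i - y)
        - vnorm ((\sum_(i in C) r i)^-1 *: (\sum_(i in C) r i *: x i) - y)).
Proof.
under eq_bigr do rewrite mulrBr.
rewrite sumrB -mulr_suml subr_ge0.
exact: cross_le.
Qed.

Lemma pair_le (R : realType) n d (C : {set 'I_n}) (r : 'I_n -> R)
  (hr : forall i, 0 < r i) (x : 'I_n -> 'rV[R]_d)
  (hrc : 0 < \sum_(i in C) r i) (c : 'rV[R]_d)
  (hc : c = (\sum_(i in C) r i)^-1 *: (\sum_(i in C) r i *: x i))
  (x' : 'I_n -> 'rV[R]_d) (hx' : forall i, x' i = if i \in C then c else x i) :
  \sum_(i in C) \sum_(j in C) r i * r j * vnorm (x i - x j) <=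
  \sum_(i < n) \sum_(j < n) r i * r j * (vnorm (x i - x j) - vnorm (x' i - x' j)).
Proof.
rewrite [X in _ <= X](bigID (fun i => i \in C)) /=.
rewrite [X in _ <= X + _](eq_bigr (fun i => \sum_(j in C) r i * r j * vnorm (x i - x j) +
     \sum_(j | j \notin C) r i * r j * (vnorm (x i - x j) - vnorm (c - x j)))); last first.
  move=> i iC; rewrite [LHS](bigID (fun j => j \in C)) /=; congr (_ + _).
    apply: eq_bigr => j jC; by rewrite !hx' iC jC subrr vnorm0 subr0.
  apply: eq_bigr => j jC; by rewrite !hx' iC (negbTE jC).
rewrite [X in _ <= _ + X](eq_bigr (fun i => \sum_(j in C) r i * r j * (vnorm (x j - x i) - vnorm (c - x i)))); last first.
  move=> i iC; rewrite [LHS](bigID (fun j => j \in C)) /=.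
  rewrite [X in _ + X]big1 ?addr0; last first.
    by move=> j jC; rewrite !hx' (negbTE iC) (negbTE jC) subrr mulr0.
  apply: eq_bigr => j jC; by rewrite !hx' (negbTE iC) jC vnormB (vnormB c).
rewrite big_split /= -addrA lerDl.
apply: addr_ge0.
  rewrite exchange_big /=; apply: sumr_ge0 => j jC.
  rewrite (eq_bigr (fun i => r j * (r i * (vnorm (x i - x j) - vnorm (c - x j))))); last first.
    by move=> i _; rewrite (mulrC (r i)) mulrA.
  by rewrite -mulr_sumr mulr_ge0 ?(ltW (hr _)) // hc; apply: cross_ge0.
apply: sumr_ge0 => i _.
rewrite (eq_bigr (fun j => r i * (r j * (vnorm (x j - x i) - vnorm (c - x i))))); last first.
  by move=> j _; rewrite mulrA.
by rewrite -mulr_sumr mulr_ge0 ?(ltW (hr _)) // hc; apply: cross_ge0.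
Qed.

Lemma quad_id (R : realType) d (e c a : 'rV[R]_d) :
  dot (e + c - a) (e + c - a) - dot (c - a) (c - a)
   = dot e e + 2 * dot e c - 2 * dot e a.
Proof.
rewrite !(dotDl, dotBl, dotDr, dotBr, dotNl, dotNr) ?(dotC c e) ?(dotC a e) ?(dotC a c).
ring.
Qed.

Lemma anti_sym (R : realType) n d (v : 'I_n -> 'I_n -> 'rV[R]_d) i j :
  anti v j i = - anti v i j.
Proof.
rewrite /anti; case: ltngtP => h; by rewrite ?opprK ?oppr0.
Qed.

Lemma anti_diag (R : realType) n d (v : 'I_n -> 'I_n -> 'rV[R]_d) i :
  anti v i i = 0.
Proof. by rewrite /anti ltnn. Qed.
Unset Implicit Arguments. Set Strict Implicit.

Theorem mainTheorem2 (R : realType) (n d : nat) (hn : (2 <= n)%N) (hd : (1 <= d)%N)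
    (a : 'I_n -> 'rV[R]_d) (r : 'I_n -> R) (hr : forall i, 0 < r i)
    (lam : R) (hlam : 0 < lam)
    (x z : 'I_n -> 'rV[R]_d) (s u : 'I_n -> R)
    (y : 'I_n -> 'I_n -> 'rV[R]_d) (t : 'I_n -> 'I_n -> R)
    (delta : 'I_n -> 'I_n -> 'rV[R]_d) (beta : 'I_n -> 'rV[R]_d)
    (gamma : 'I_n -> R)
    (hP : primal_feasible a x z s u y t)
    (hD : dual_feasible r lam delta beta gamma)
    (C : {set 'I_n}) (hC : C != set0)
    (hq : forall i j : 'I_n, i \in C -> j \in C -> (i < j)%N ->
            vnorm (qvec r C x z s u delta beta gamma i j) <= lam)
    (xs : 'I_n -> 'rV[R]_d) (hxs : is_minimizer_P a r lam xs) :
  forall i j : 'I_n, i \in C -> j \in C -> xs i = xs j.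
Proof.
case: hP => _ [hz [hs [_ hsu]]].
case: hD => [hb _].
set rc := \sum_(i in C) r i.
have hrc : 0 < rc.
  case/set0Pn: hC => i0 i0C.
  rewrite /rc (bigD1 i0) //=.
  have : 0 <= \sum_(i in C | i != i0) r i by apply: sumr_ge0 => i _; apply: ltW.
  have := hr i0; lra.
have hs0 : forall i, s i != 0.
  move=> i; have h := hsu i; rewrite /vnorm_ext in h.
  have hS : 0 <= \sum_(k < d) z i ord0 k ^+ 2 by apply: sumr_ge0 => k _; exact: sqr_ge0.
  have h2 : `|u i| <= s i.
    apply: le_trans h; rewrite -sqrtr_sqr ler_sqrt ?addr_ge0 ?sqr_ge0 // lerDr //.
  have h3 : - u i <= `|u i| by rewrite -normrN ler_norm.
  apply/eqP => e; have := hs i; lra.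
have hom : forall i, omega z beta s u gamma i = x i - a i + beta i.
  move=> i; rewrite -hz; apply/rowP => k.
  rewrite /omega /sigma2 /sigma3 !mxE.
  have := hs0 i; rewrite hs => h0.
  by field.
pose dl := anti delta.
have hbeta : forall i, beta i = - (\sum_(k in C) r k *: dl i k + \sum_(k | k \notin C) r k *: dl i k).
  move=> i; have := hb i; rewrite (bigID (fun k => k \in C)) /= addrC => /eqP.
  by rewrite addr_eq0 => /eqP ->; rewrite opprK.
pose V i := x i - omega z beta s u gamma i - \sum_(k | k \notin C) r k *: dl i k.
have hV : forall i, V i = a i + \sum_(k in C) r k *: dl i k.
  move=> i; rewrite /V hom hbeta; apply/rowP => m; rewrite !mxE.
  ring.
pose Qf i j := - dl i j + rc^-1 *: (V i - V j).
have hQq : forall i j : 'I_n, (i < j)%N -> qvec r C x z s u delta beta gamma i j = Qf i j.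
  move=> i j ij; rewrite /qvec /Qf /V /rC -/rc.
  have -> : delta i j = dl i j by rewrite /dl /anti ij.
  have -> : \sum_(k < n | k \notin C) r k *: (anti delta i k - anti delta j k) =
     \sum_(k < n | k \notin C) r k *: dl i k - \sum_(k < n | k \notin C) r k *: dl j k.
    by rewrite -sumrB; apply: eq_bigr => k _; rewrite scalerBr.
  apply/rowP => m; rewrite !mxE.
  ring.
have hQs : forall i j, Qf j i = - Qf i j.
  move=> i j; rewrite /Qf /dl anti_sym; apply/rowP => m; rewrite !mxE; ring.
have hQb : forall i j, i \in C -> j \in C -> vnorm (Qf i j) <= lam.
  move=> i j iC jC; case: (ltngtP i j) => h.
  - by rewrite -hQq // hq.
  - by rewrite -(opprK (Qf i j)) -hQs vnormN -hQq // hq.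
  - have -> : Qf i j = 0.
      by rewrite (val_inj h) /Qf /dl anti_diag subrr scaler0 oppr0 addr0.
    by rewrite vnorm0 ltW.
pose Vb := rc^-1 *: \sum_(j in C) r j *: V j.
have hQa : forall i, i \in C -> a i = Vb + \sum_(j in C) r j *: Qf i j.
  move=> i iC.
  rewrite (eq_bigr (fun j => - (r j *: dl i j) + (rc^-1 * r j) *: V i - rc^-1 *: (r j *: V j))); last first.
    by move=> j _; rewrite /Qf; apply/rowP => m; rewrite !mxE; ring.
  rewrite sumrB big_split /= sumrN -scaler_suml -scaler_sumr -mulr_sumr -/rc mulVf ?gt_eqF // scale1r.
  rewrite hV /Vb; apply/rowP => m; rewrite !mxE; ring.
set c := rc^-1 *: \sum_(i in C) r i *: xs i.
pose x' i := if i \in C then c else xs i.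
have hc : \sum_(i in C) r i *: (xs i - c) = 0.
  have -> : \sum_(i in C) r i *: (xs i - c) = \sum_(i in C) r i *: xs i - rc *: c.
    by rewrite /rc scaler_suml -sumrB; apply: eq_bigr => i _; rewrite scalerBr.
  by rewrite /c scalerA mulfV ?gt_eqF // scale1r subrr.
have hin := inner_le hr hc hQa hQs hQb.
have hpair := pair_le hr hrc (erefl c) (x' := x') (fun i => erefl).
have hmin := hxs x'.
set E := \sum_(i in C) r i * dot (xs i - c) (xs i - c).
set T := \sum_(i in C) r i * dot (xs i - c) (a i).
set A1 := \sum_(i < n) r i * vnorm (xs i - a i) ^+ 2.
set A2 := \sum_(i < n) r i * vnorm (x' i - a i) ^+ 2.
have hA : A1 - A2 = E - 2 * T.
  rewrite /A1 /A2 -sumrB (bigID (fun i => i \in C)) /=.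
  rewrite [X in _ + X]big1 ?addr0; last first.
    by move=> i iC; rewrite /x' (negbTE iC) subrr.
  rewrite (eq_bigr (fun i => r i * dot (xs i - c) (xs i - c) + 2 * (r i * dot (xs i - c) c)
                      - 2 * (r i * dot (xs i - c) (a i)))); last first.
    move=> i iC; rewrite /x' iC !vnorm_sq -mulrBr.
    have := quad_id (xs i - c) c (a i); rewrite subrK => ->; ring.
  rewrite sumrB big_split /= -!mulr_sumr.
  have -> : \sum_(i in C) r i * dot (xs i - c) c = 0.
    rewrite -[RHS](dot0l c) -hc dot_suml; apply: eq_big => // i _; by rewrite dotZl.
  by rewrite mulr0 addr0.
have psum : forall w : 'I_n -> 'rV[R]_d,
   \sum_(i < n) \sum_(j < n | (i < j)%N) r i * r j * vnorm (w i - w j) =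
   2^-1 * \sum_(i < n) \sum_(j < n) r i * r j * vnorm (w i - w j).
  move=> w; apply: pair_sum => [i j|i]; first by rewrite vnormB (mulrC (r i)).
  by rewrite subrr vnorm0 mulr0.
move: hmin; rewrite /fP !psum -/A1 -/A2.
set P1 := \sum_(i < n) \sum_(j < n) r i * r j * vnorm (xs i - xs j).
set P2 := \sum_(i < n) \sum_(j < n) r i * r j * vnorm (x' i - x' j).
move=> hmin.
have hG : \sum_(i < n) \sum_(j < n) r i * r j * (vnorm (xs i - xs j) - vnorm (x' i - x' j))
    = P1 - P2.
  rewrite /P1 /P2 -sumrB; apply: eq_bigr => i _; rewrite -sumrB; apply: eq_bigr => j _.
  by rewrite mulrBr.
rewrite hG in hpair.
set B := \sum_(i in C) \sum_(j in C) r i * r j * vnorm (xs i - xs j).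
have key : A1 - A2 + lam * (P1 - P2) <= 0.
  have e : A1 - A2 + lam * (P1 - P2) =
     2 * ((2^-1 * A1 + lam * (2^-1 * P1)) - (2^-1 * A2 + lam * (2^-1 * P2))) by field.
  by rewrite e pmulr_rle0 // subr_le0.
have hlB : lam * B <= lam * (P1 - P2) by rewrite ler_pM2l.
have hE : 0 <= E by apply: sumr_ge0 => i _; rewrite mulr_ge0 ?dot_ge0 // ltW.
have hE0 : E <= 0.
  move: hin; rewrite -/T -/B => hin.
  rewrite hA in key; lra.
have hxc : forall i, i \in C -> xs i = c.
  move=> i iC.
  have h1 : r i * dot (xs i - c) (xs i - c) <= E.
    rewrite /E (bigD1 i) //= lerDl; apply: sumr_ge0 => k _.
    by rewrite mulr_ge0 ?dot_ge0 // ltW.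
  have h2 : r i * dot (xs i - c) (xs i - c) = 0.
    apply/eqP; rewrite eq_le; apply/andP; split; first exact: le_trans h1 hE0.
    by rewrite mulr_ge0 ?dot_ge0 // ltW.
  move/eqP: h2; rewrite mulf_eq0 gt_eqF //= => /eqP /dot_eq0 /eqP.
  by rewrite subr_eq0 => /eqP.
by move=> i j iC jC; rewrite !hxc.
Qed.
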